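(* Let $B_n$ ($n\ge 2$) be endowed with the dual Garside structure and let $\varepsilon=\delta a_{21}$. For an integer $k$, let $d=\gcd(k,n-1)$ and let $p,q$ be integers with $(n-1)p+kq=d$. Let $[\varepsilon^d]$ and $[\varepsilon^k]$ denote the conjugacy classes of $\varepsilon^d$ and $\varepsilon^k$, and define $f:[\varepsilon^d]\to[\varepsilon^k]$ and $g:[\varepsilon^k]\to[\varepsilon^d]$ by $f(\alpha)=\alpha^{k/d}$ and $g(\beta)=\delta^{np}\beta^q$. Then $f$ and $g$ are inverse to each other, $f([\varepsilon^d]^{St})=[\varepsilon^k]^{St}$ and $g([\varepsilon^k]^{St})=[\varepsilon^d]^{St}$. In particular, $$\#[\varepsilon^d]^S=\#[\varepsilon^d]^{St}=\#[\varepsilon^k]^{St}\leqslant\#[\varepsilon^k]^S.$$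
   Context: $B_n$ has band generators $a_{ij}$ ($1\le j<i\le n$), $a_{ij}=\sigma_{i-1}\cdots\sigma_{j+1}\sigma_j\sigma_{j+1}^{-1}\cdots\sigma_{i-1}^{-1}$. The dual Garside structure is $(B_n,B_n^+,\delta)$ with $B_n^+$ the monoid of positive words in band generators and $\delta=a_{n,n-1}\cdots a_{21}=\sigma_{n-1}\cdots\sigma_1$. $\alpha\preccurlyeq\beta$ iff $\alpha^{-1}\beta\in B_n^+$. $\inf(\alpha)=\max\{r:\delta^r\preccurlyeq\alpha\}$, $\sup(\alpha)=\min\{s:\alpha\preccurlyeq\delta^s\}$, $\operatorname{len}=\sup-\inf$. The super summit set $[\alpha]^S$ is the set of conjugates of $\alpha$ of minimal $\operatorname{len}$; the stable super summit set is $[\alpha]^{St}=\{\beta\in[\alpha]^S:\beta^m\in[\alpha^m]^S\text{ for all }m\in\mathbb Z\}$. *)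

(* Defs.v *)
(* The braid group B_n is given by its Artin presentation:
   elements are words in the letters sigma_i^{+-1} (1 <= i <= n-1), modulo the
   congruence [beq n] generated by free cancellation and the Artin relations. *)
From Stdlib Require Import List ZArith Arith Lia.
Import ListNotations.

(* (i, true) = sigma_i, (i, false) = sigma_i^{-1} *)
Definition letter := (nat * bool)%type.
Definition word := list letter.

Definition winv (w : word) : word := rev (map (fun '(i, b) => (i, negb b)) w).

Definition valid (n : nat) (w : word) : Prop :=
  Forall (fun '(i, _) => 1 <= i <= n - 1) w.

Inductive brel (n : nat) : word -> word -> Prop :=
| brel_free i b : 1 <= i <= n - 1 -> brel n [(i, b); (i, negb b)] []
| brel_comm i j : 1 <= i <= n - 1 -> 1 <= j <= n - 1 -> i + 2 <= j ->
    brel n [(i, true); (j, true)] [(j, true); (i, true)]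
| brel_braid i : 1 <= i -> i + 1 <= n - 1 ->
    brel n [(i, true); (i + 1, true); (i, true)]
           [(i + 1, true); (i, true); (i + 1, true)].

Inductive beq (n : nat) : word -> word -> Prop :=
| beq_rel u v a c : brel n u v -> beq n (a ++ u ++ c) (a ++ v ++ c)
| beq_refl u : beq n u u
| beq_sym u v : beq n u v -> beq n v u
| beq_trans u v w : beq n u v -> beq n v w -> beq n u w.

Definition wpow (w : word) (m : Z) : word :=
  match m with
  | Z0 => []
  | Zpos p => concat (repeat w (Pos.to_nat p))
  | Zneg p => concat (repeat (winv w) (Pos.to_nat p))
  end.

(* band generator a_{ij} = s_{i-1}..s_{j+1} s_j s_{j+1}^{-1}..s_{i-1}^{-1} *)
Definition band (i j : nat) : word :=
  map (fun m => (m, true)) (rev (seq (j + 1) (i - j - 1)))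
  ++ [(j, true)]
  ++ map (fun m => (m, false)) (seq (j + 1) (i - j - 1)).

(* delta = a_{n,n-1} ... a_{21} *)
Definition delta (n : nat) : word :=
  concat (map (fun i => band (i + 1) i) (rev (seq 1 (n - 1)))).

Definition positive (n : nat) (w : word) : Prop :=
  exists l : list (nat * nat),
    Forall (fun '(i, j) => 1 <= j /\ j < i /\ i <= n) l /\
    beq n w (concat (map (fun '(i, j) => band i j) l)).

Definition preceq (n : nat) (a b : word) : Prop := positive n (winv a ++ b).

Definition is_inf (n : nat) (a : word) (r : Z) : Prop :=
  preceq n (wpow (delta n) r) a /\
  forall r', preceq n (wpow (delta n) r') a -> (r' <= r)%Z.

Definition is_sup (n : nat) (a : word) (s : Z) : Prop :=
  preceq n a (wpow (delta n) s) /\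
  forall s', preceq n a (wpow (delta n) s') -> (s <= s')%Z.

Definition is_len (n : nat) (a : word) (l : Z) : Prop :=
  exists r s, is_inf n a r /\ is_sup n a s /\ l = (s - r)%Z.

Definition conj_class (n : nat) (a b : word) : Prop :=
  valid n b /\ exists c, valid n c /\ beq n b (winv c ++ a ++ c).

Definition sss (n : nat) (a b : word) : Prop :=
  conj_class n a b /\
  exists l, is_len n b l /\
    forall c l', conj_class n a c -> is_len n c l' -> (l <= l')%Z.

Definition stable_sss (n : nat) (a b : word) : Prop :=
  sss n a b /\ forall m : Z, sss n (wpow a m) (wpow b m).

(* the set of braids satisfying P (a beq-invariant predicate) is finite with
   exactly N elements of B_n *)
Definition has_card (n : nat) (P : word -> Prop) (N : nat) : Prop :=
  exists l : list word,
    length l = N /\ Forall P l /\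
    ForallOrdPairs (fun u v => ~ beq n u v) l /\
    (forall w, P w -> Exists (beq n w) l).

Definition eps (n : nat) : word := delta n ++ band 2 1.

(* Main.v *)
Require Import Defs.
From Stdlib Require Import List ZArith Arith Lia Setoid Morphisms Classical.
Import ListNotations.

Section B.
Variable n : nat.

Lemma beq_app_r a b c : beq n a b -> beq n (a ++ c) (b ++ c).
Proof.
  induction 1.
  - rewrite <- !app_assoc. apply beq_rel; auto.
  - apply beq_refl.
  - now apply beq_sym.
  - eapply beq_trans; eauto.
Qed.

Lemma beq_app_l a b c : beq n a b -> beq n (c ++ a) (c ++ b).
Proof.
  induction 1.
  - rewrite !(app_assoc c a). apply beq_rel; auto.
  - apply beq_refl.
  - now apply beq_sym.
  - eapply beq_trans; eauto.
Qed.

Global Instance beq_Equiv : Equivalence (beq n).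
Proof. split; [intro; apply beq_refl | intros ??; apply beq_sym | intros ???; apply beq_trans]. Qed.

Global Instance app_Proper : Proper (beq n ==> beq n ==> beq n) (@app letter).
Proof. intros a b H c d H'. transitivity (b ++ c). now apply beq_app_r. now apply beq_app_l. Qed.

Lemma winv_app a b : winv (a ++ b) = winv b ++ winv a.
Proof. unfold winv. now rewrite map_app, rev_app_distr. Qed.

Lemma winv_winv a : winv (winv a) = a.
Proof. unfold winv. rewrite map_rev, rev_involutive, map_map.
  induction a as [|[i b] a IH]; simpl; auto. rewrite Bool.negb_involutive. now f_equal. Qed.

Lemma winv_cons x a : winv (x :: a) = winv a ++ winv [x].
Proof. now rewrite <- winv_app. Qed.

Lemma valid_app a b : valid n (a ++ b) <-> valid n a /\ valid n b.
Proof. unfold valid. apply Forall_app. Qed.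

Lemma valid_winv a : valid n a -> valid n (winv a).
Proof. unfold valid, winv. intro H. apply Forall_rev. apply Forall_map.
  eapply Forall_impl; [|exact H]. now intros [i b]. Qed.

Lemma valid_nil : valid n [].
Proof. constructor. Qed.

Lemma brel_valid u v : brel n u v -> valid n u /\ valid n v.
Proof. intros []; unfold valid; repeat constructor; lia. Qed.

Lemma beq_valid a b : beq n a b -> (valid n a <-> valid n b).
Proof.
  induction 1; try tauto.
  apply brel_valid in H as [H1 H2]. rewrite !valid_app. tauto.
Qed.

Lemma cancel_r a : valid n a -> beq n (a ++ winv a) [].
Proof.
  induction a as [|[i b] a IH]; intro V; simpl. reflexivity.
  inversion V; subst. rewrite winv_cons.
  change (winv [(i,b)]) with [(i, negb b)].
  rewrite app_assoc. change ((i,b) :: (a ++ winv a) ++ [(i, negb b)]) with ([(i,b)] ++ (a ++ winv a) ++ [(i, negb b)]).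
  rewrite IH by auto. simpl. apply (beq_rel n [(i,b); (i,negb b)] [] [] []). now constructor.
Qed.

Lemma cancel_l a : valid n a -> beq n (winv a ++ a) [].
Proof.
  intro V. pose proof (cancel_r (winv a) (valid_winv _ V)). now rewrite winv_winv in H.
Qed.

Lemma winv_beq a b : valid n a -> beq n a b -> beq n (winv a) (winv b).
Proof.
  intros Va H. assert (Vb : valid n b) by (now apply (beq_valid _ _ H)).
  transitivity (winv a ++ b ++ winv b).
  { rewrite cancel_r by auto. now rewrite app_nil_r. }
  transitivity (winv a ++ a ++ winv b). { apply beq_app_l, beq_app_r. now symmetry. }
  rewrite app_assoc, cancel_l by auto. reflexivity.
Qed.

End B.
Lemma repeat_snoc {A} (x : A) k : repeat x (S k) = repeat x k ++ [x].
Proof. induction k; simpl; auto. simpl in IHk. now rewrite IHk. Qed.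

Lemma concat_rep_snoc (w : word) k : concat (repeat w (S k)) = concat (repeat w k) ++ w.
Proof. rewrite repeat_snoc, concat_app. simpl. now rewrite app_nil_r. Qed.

Lemma wpow_nat w k : wpow w (Z.of_nat k) = concat (repeat w k).
Proof. destruct k; simpl; auto. now rewrite SuccNat2Pos.id_succ. Qed.

Lemma wpow_negnat w k : wpow w (- Z.of_nat k)%Z = concat (repeat (winv w) k).
Proof. destruct k; simpl; auto. now rewrite SuccNat2Pos.id_succ. Qed.

Lemma Z_nat_cases (m : Z) : (exists k, m = Z.of_nat k) \/ (exists k, m = - Z.of_nat (S k))%Z.
Proof.
  destruct (Z_le_gt_dec 0 m). left. exists (Z.to_nat m). lia.
  right. exists (Z.to_nat (- m - 1)). lia.
Qed.

Section C.
Variable n : nat.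

Lemma valid_concat_rep w k : valid n w -> valid n (concat (repeat w k)).
Proof. intro V. induction k; simpl. constructor. apply valid_app; auto. Qed.

Lemma valid_wpow w m : valid n w -> valid n (wpow w m).
Proof. intro V. destruct m; simpl; try constructor; apply valid_concat_rep; auto. now apply valid_winv. Qed.

Lemma wpow_succ w m : valid n w -> beq n (wpow w (m + 1)) (wpow w m ++ w).
Proof.
  intro V. destruct (Z_nat_cases m) as [[k ->]|[k ->]].
  - replace (Z.of_nat k + 1)%Z with (Z.of_nat (S k)) by lia.
    rewrite !wpow_nat, concat_rep_snoc. reflexivity.
  - replace (- Z.of_nat (S k) + 1)%Z with (- Z.of_nat k)%Z by lia.
    rewrite !wpow_negnat, concat_rep_snoc, <- app_assoc, cancel_l by auto.
    now rewrite app_nil_r.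
Qed.

Lemma wpow_pred w m : valid n w -> beq n (wpow w (m - 1)) (wpow w m ++ winv w).
Proof.
  intro V. pose proof (wpow_succ w (m - 1) V) as H. replace (m - 1 + 1)%Z with m in H by lia.
  rewrite H, <- app_assoc, cancel_r by auto. now rewrite app_nil_r.
Qed.

Lemma wpow_0 w : wpow w 0 = [].
Proof. reflexivity. Qed.

Lemma wpow_1 w : wpow w 1 = w.
Proof. simpl. now rewrite app_nil_r. Qed.

Lemma wpow_add w a b : valid n w -> beq n (wpow w (a + b)) (wpow w a ++ wpow w b).
Proof.
  intro V. revert a. induction b using Z.peano_ind; intro a.
  - rewrite Z.add_0_r, wpow_0, app_nil_r. reflexivity.
  - rewrite <- !Z.add_1_r, Z.add_assoc, !wpow_succ, IHb by auto. now rewrite app_assoc.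
  - rewrite <- !Z.sub_1_r, Z.add_sub_assoc, !wpow_pred, IHb by auto. now rewrite app_assoc.
Qed.

Lemma wpow_opp w a : valid n w -> beq n (wpow w (- a)%Z) (winv (wpow w a)).
Proof.
  intro V. transitivity (winv (wpow w a) ++ wpow w a ++ wpow w (- a)).
  - rewrite app_assoc, cancel_l by (now apply valid_wpow). reflexivity.
  - rewrite <- wpow_add by auto. replace (a + - a)%Z with 0%Z by lia. simpl. now rewrite app_nil_r.
Qed.

Lemma wpow_mul w a b : valid n w -> beq n (wpow (wpow w a) b) (wpow w (a * b)).
Proof.
  intro V. assert (V' := valid_wpow w a V). induction b using Z.peano_ind.
  - rewrite Z.mul_0_r. reflexivity.
  - rewrite <- Z.add_1_r, wpow_succ, IHb by auto.
    rewrite Z.mul_add_distr_l, Z.mul_1_r, wpow_add by auto. reflexivity.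
  - rewrite <- Z.sub_1_r, wpow_pred, IHb by auto.
    rewrite Z.mul_sub_distr_l, Z.mul_1_r, <- Z.add_opp_r, wpow_add, wpow_opp by auto. reflexivity.
Qed.

Lemma wpow_proper u v m : valid n u -> beq n u v -> beq n (wpow u m) (wpow v m).
Proof.
  intros Vu H. assert (Vv : valid n v) by (now apply (beq_valid n _ _ H)).
  induction m using Z.peano_ind.
  - reflexivity.
  - rewrite <- Z.add_1_r, !wpow_succ, IHm, H by auto. reflexivity.
  - rewrite <- Z.sub_1_r, !wpow_pred, IHm by auto. rewrite (winv_beq n u v Vu H). reflexivity.
Qed.

Lemma wpow_conj c x m : valid n c -> valid n x ->
  beq n (wpow (winv c ++ x ++ c) m) (winv c ++ wpow x m ++ c).
Proof.
  intros Vc Vx. assert (V : valid n (winv c ++ x ++ c)) by (rewrite !valid_app; auto using valid_winv).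
  induction m using Z.peano_ind.
  - simpl. now rewrite cancel_l.
  - rewrite <- Z.add_1_r, !wpow_succ, IHm by auto.
    rewrite !app_assoc. rewrite <- (app_assoc _ c (winv c)), cancel_r, app_nil_r by auto.
    try reflexivity; now rewrite !app_assoc.
  - rewrite <- Z.sub_1_r, !wpow_pred, IHm by auto. rewrite !winv_app, winv_winv.
    rewrite !app_assoc. rewrite <- (app_assoc _ c (winv c)), cancel_r, app_nil_r by auto.
    try reflexivity; now rewrite !app_assoc.
Qed.

Definition central (w : word) := forall v, valid n v -> beq n (w ++ v) (v ++ w).

Lemma central_winv w : valid n w -> central w -> central (winv w).
Proof.
  intros V C v Vv. transitivity (winv w ++ v ++ w ++ winv w).
  - rewrite (cancel_r n w V), app_nil_r. reflexivity.
  - rewrite (app_assoc v w), <- (C v Vv), !app_assoc, cancel_l by auto. reflexivity.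
Qed.

Lemma central_wpow w m : valid n w -> central w -> central (wpow w m).
Proof.
  intros V C. induction m using Z.peano_ind; intros v Vv.
  - simpl. now rewrite app_nil_r.
  - rewrite <- Z.add_1_r, wpow_succ by auto. rewrite <- app_assoc, (C v Vv), app_assoc, (IHm v Vv).
    now rewrite app_assoc.
  - rewrite <- Z.sub_1_r, wpow_pred by auto. rewrite <- app_assoc, (central_winv w V C v Vv), app_assoc, (IHm v Vv).
    now rewrite app_assoc.
Qed.

End C.
Definition lsgn (b : bool) : Z := if b then 1%Z else (-1)%Z.
Fixpoint esum (w : word) : Z := match w with [] => 0%Z | x :: w' => (lsgn (snd x) + esum w')%Z end.

Lemma esum_app a b : esum (a ++ b) = (esum a + esum b)%Z.
Proof. induction a; simpl; lia. Qed.

Lemma esum_winv a : esum (winv a) = (- esum a)%Z.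
Proof. induction a as [|[i b] a IH]. reflexivity. rewrite winv_cons, esum_app, IH.
  change (winv [(i,b)]) with [(i, negb b)]. destruct b; cbn [esum lsgn snd negb]; lia. Qed.

Lemma esum_concat_rep w k : esum (concat (repeat w k)) = (Z.of_nat k * esum w)%Z.
Proof. induction k. reflexivity. cbn [concat repeat]. rewrite esum_app, IHk. lia. Qed.

Lemma esum_wpow w m : esum (wpow w m) = (m * esum w)%Z.
Proof. destruct m as [|p|p]; [reflexivity| |]; unfold wpow; rewrite esum_concat_rep; try rewrite esum_winv; rewrite positive_nat_Z; lia. Qed.

Lemma esum_beq n a b : beq n a b -> esum a = esum b.
Proof.
  induction 1; try congruence.
  rewrite !esum_app. f_equal. f_equal. destruct H; simpl; try destruct b; simpl; lia.
Qed.

Definition s (i : nat) : letter := (i, true).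
Definition sinv (i : nat) : letter := (i, false).

Lemma winv_map_s L : winv (map s L) = map sinv (rev L).
Proof. unfold winv. rewrite map_map, map_rev. reflexivity. Qed.

Lemma winv_map_sinv L : winv (map sinv L) = map s (rev L).
Proof. unfold winv. rewrite map_map, map_rev. reflexivity. Qed.

Definition bands (l : list (nat * nat)) : word := concat (map (fun '(i, j) => band i j) l).

Lemma band_eq i j : band i j = map s (rev (seq (j+1) (i-j-1))) ++ [s j] ++ map sinv (seq (j+1) (i-j-1)).
Proof. reflexivity. Qed.

Lemma esum_map_s L : esum (map s L) = Z.of_nat (length L).
Proof. induction L; [reflexivity|]. cbn [map esum lsgn s sinv snd length]. rewrite IHL. lia. Qed.
Lemma esum_map_sinv L : esum (map sinv L) = (- Z.of_nat (length L))%Z.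
Proof. induction L; [reflexivity|]. cbn [map esum lsgn s sinv snd length]. rewrite IHL. lia. Qed.

Lemma esum_band i j : esum (band i j) = 1%Z.
Proof. rewrite band_eq, !esum_app, esum_map_s, esum_map_sinv, length_rev. cbn [esum lsgn s snd]. lia. Qed.

Lemma esum_bands l : esum (bands l) = Z.of_nat (length l).
Proof. induction l as [|[i j] l IH]; simpl; auto. unfold bands in *; simpl.
  rewrite esum_app, esum_band, IH. lia. Qed.

Definition vpair (n : nat) (p : nat * nat) : Prop := let '(i, j) := p in 1 <= j /\ j < i /\ i <= n.

Lemma valid_map_s n L : Forall (fun i => 1 <= i <= n - 1) L -> valid n (map s L).
Proof. intro H. unfold valid. apply Forall_map. eapply Forall_impl; [|exact H]. auto. Qed.
Lemma valid_map_sinv n L : Forall (fun i => 1 <= i <= n - 1) L -> valid n (map sinv L).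
Proof. intro H. unfold valid. apply Forall_map. eapply Forall_impl; [|exact H]. auto. Qed.

Lemma Forall_seq (P : nat -> Prop) a l : (forall x, a <= x < a + l -> P x) -> Forall P (seq a l).
Proof. intro H. apply Forall_forall. intros x Hx. apply in_seq in Hx. apply H; lia. Qed.

Lemma valid_band n i j : vpair n (i, j) -> valid n (band i j).
Proof.
  intros (H1 & H2 & H3). rewrite band_eq. apply valid_app. split; [|apply valid_app; split].
  - apply valid_map_s, Forall_rev, Forall_seq. lia.
  - repeat constructor; lia.
  - apply valid_map_sinv, Forall_seq. lia.
Qed.

Lemma valid_bands n l : Forall (vpair n) l -> valid n (bands l).
Proof. induction 1 as [|[i j] l H Hl IH]; unfold bands; simpl. constructor.
  apply valid_app. split; auto. now apply valid_band. Qed.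

Lemma bands_app l1 l2 : bands (l1 ++ l2) = bands l1 ++ bands l2.
Proof. unfold bands. now rewrite map_app, concat_app. Qed.

Section P.
Variable n : nat.

Lemma pos_beq a b : beq n a b -> Defs.positive n a -> Defs.positive n b.
Proof. intros H (l & Hl & H'). exists l. split; auto. now rewrite <- H. Qed.

Lemma pos_nil : Defs.positive n [].
Proof. exists []. split. constructor. reflexivity. Qed.

Lemma pos_app a b : Defs.positive n a -> Defs.positive n b -> Defs.positive n (a ++ b).
Proof. intros (l1 & H1 & E1) (l2 & H2 & E2). exists (l1 ++ l2). split.
  now apply Forall_app. rewrite E1, E2. unfold bands. now rewrite map_app, concat_app. Qed.

Lemma pos_band i j : vpair n (i, j) -> Defs.positive n (band i j).
Proof. intro H. exists [(i, j)]. split. now constructor. simpl. now rewrite app_nil_r. Qed.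

Lemma pos_bands w : Defs.positive n w -> exists l, Forall (vpair n) l /\ beq n w (bands l) /\ esum w = Z.of_nat (length l).
Proof.
  intros (l & H & E). exists l. split; [|split].
  - eapply Forall_impl; [|exact H]. now intros [i j].
  - exact E.
  - rewrite (esum_beq _ _ _ E). apply esum_bands.
Qed.

Lemma pos_esum w : Defs.positive n w -> (0 <= esum w)%Z.
Proof. intro H. destruct (pos_bands w H) as (l & _ & _ & E). lia. Qed.

Lemma pos_valid w : Defs.positive n w -> valid n w.
Proof. intros H. destruct (pos_bands w H) as (l & Hl & E & _).
  apply (beq_valid _ _ _ E). now apply valid_bands. Qed.

End P.
Definition D (k : nat) : word := map s (rev (seq 1 k)).
Definition shiftw (w : word) : word := map (fun x => (S (fst x), snd x)) w.

Lemma D_S k : D (S k) = s (S k) :: D k.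
Proof. unfold D. rewrite seq_S, rev_app_distr. reflexivity. Qed.

Lemma shiftw_map_s L : shiftw (map s L) = map s (map S L).
Proof. unfold shiftw. rewrite !map_map. reflexivity. Qed.

Lemma shiftw_app a b : shiftw (a ++ b) = shiftw a ++ shiftw b.
Proof. apply map_app. Qed.

Lemma D_S' k : D (S k) = shiftw (D k) ++ [s 1].
Proof. unfold D, shiftw. cbn [seq rev]. rewrite map_app. f_equal.
  rewrite <- (seq_shift k 1), !map_rev, !map_map. reflexivity. Qed.

Lemma band_succ j : band (S j) j = [s j].
Proof. rewrite band_eq. replace (S j - j - 1) with 0 by lia. reflexivity. Qed.

Lemma delta_D n : delta n = D (n - 1).
Proof. unfold delta, D. generalize (rev (seq 1 (n - 1))). induction l; simpl; auto.
  rewrite Nat.add_1_r, band_succ, IHl. reflexivity. Qed.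

Lemma band_shift i j : shiftw (band i j) = band (S i) (S j).
Proof. rewrite !band_eq. unfold shiftw. rewrite !map_app.
  replace (S i - S j - 1) with (i - j - 1) by lia.
  replace (S j + 1) with (S (j + 1)) by lia. rewrite <- (seq_shift _ (j + 1)), !map_rev, !map_map. reflexivity. Qed.

Lemma band_top m j : j <= m -> band (S (S m)) j = [s (S m)] ++ band (S m) j ++ [sinv (S m)].
Proof.
  intro H. rewrite !band_eq. replace (S (S m) - j - 1) with (S (S m - j - 1)) by lia.
  rewrite seq_S. replace (j + 1 + (S m - j - 1)) with (S m) by lia.
  rewrite rev_app_distr, !map_app. simpl. now rewrite <- !app_assoc.
Qed.

Lemma band_j1 j : 1 <= j -> band (S j) 1 = shiftw (D (j - 1)) ++ [s 1] ++ winv (shiftw (D (j - 1))).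
Proof.
  intro H. unfold D. rewrite shiftw_map_s, map_rev, seq_shift, winv_map_s, rev_involutive, band_eq.
  replace (S j - 1 - 1) with (j - 1) by lia. reflexivity.
Qed.

Section Br.
Variable n : nat.

Lemma brel_beq u v : brel n u v -> beq n u v.
Proof. intro H. pose proof (beq_rel n u v [] [] H) as H'. simpl in H'. now rewrite !app_nil_r in H'. Qed.

Lemma inv_swap x d z : valid n x -> valid n d -> valid n z ->
  beq n (x ++ d) (d ++ z) -> beq n (winv x ++ d) (d ++ winv z).
Proof.
  intros Vx Vd Vz H. transitivity (winv x ++ d ++ z ++ winv z).
  - rewrite (cancel_r n z Vz), app_nil_r. reflexivity.
  - rewrite (app_assoc d z), <- H, !app_assoc, cancel_l by auto. reflexivity.
Qed.

Lemma valid_one i b : 1 <= i <= n - 1 -> valid n [(i, b)].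
Proof. intro H. constructor; [exact H | constructor]. Qed.

Definition farfrom (a c : nat) := 1 <= c <= n - 1 /\ (a + 2 <= c \/ c + 2 <= a).

Lemma comm_ss a c : 1 <= a <= n - 1 -> farfrom a c -> beq n [s a; s c] [s c; s a].
Proof.
  intros Ha [Hc [H|H]].
  - apply brel_beq. constructor; lia.
  - symmetry. apply brel_beq. constructor; lia.
Qed.

Lemma comm_block a b L : 1 <= a <= n - 1 -> Forall (farfrom a) L ->
  beq n ([(a, b)] ++ map s L) (map s L ++ [(a, b)]).
Proof.
  intros Ha HL. induction HL as [|c L Hc HL IH]. simpl. reflexivity.
  change ([(a, b)] ++ map s (c :: L)) with ([(a, b); s c] ++ map s L).
  assert (E : beq n [(a, b); s c] [s c; (a, b)]).
  { destruct b. apply comm_ss; auto.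
    assert (Hc' := proj1 Hc).
    apply (inv_swap [s a] [s c] [s a]); try (apply valid_one; lia).
    now apply comm_ss. }
  rewrite E. change ([s c; (a, b)] ++ map s L) with ([s c] ++ [(a, b)] ++ map s L).
  rewrite IH. reflexivity.
Qed.

Lemma valid_D j : j <= n - 1 -> valid n (D j).
Proof. intro H. apply valid_map_s, Forall_rev, Forall_seq. lia. Qed.

Lemma shift_letter i b j : 1 <= i -> i + 1 <= j -> j <= n - 1 ->
  beq n ([(i, b)] ++ D j) (D j ++ [(S i, b)]).
Proof.
  intros H1 H2 H3.
  assert (Es : seq 1 j = seq 1 (i - 1) ++ [i; S i] ++ seq (S (S i)) (j - i - 1)).
  { replace j with ((i - 1) + (2 + (j - i - 1))) at 1 by lia. rewrite seq_app.
    replace (1 + (i - 1)) with i by lia. reflexivity. }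
  assert (ED : D j = map s (rev (seq (S (S i)) (j - i - 1))) ++ [s (S i); s i] ++ D (i - 1)).
  { unfold D. rewrite Es, !rev_app_distr, !map_app. simpl. now rewrite <- app_assoc. }
  assert (T : beq n ([s i] ++ D j) (D j ++ [s (S i)])).
  { rewrite ED. set (B := map s (rev (seq (S (S i)) (j - i - 1)))). set (C := D (i - 1)).
    transitivity (B ++ [s i] ++ [s (S i); s i] ++ C).
    { rewrite (app_assoc [s i] B), (app_assoc B [s i]). apply beq_app_r. apply comm_block. lia.
      apply Forall_rev, Forall_seq. intros x Hx. split; lia. }
    transitivity (B ++ [s (S i); s i; s (S i)] ++ C).
    { apply beq_app_l. change ([s i] ++ [s (S i); s i] ++ C) with ([s i; s (S i); s i] ++ C).
      apply beq_app_r. rewrite <- Nat.add_1_r. apply brel_beq. constructor; lia. }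
    transitivity (B ++ [s (S i); s i] ++ C ++ [s (S i)]).
    { apply beq_app_l. change ([s (S i); s i; s (S i)] ++ C) with ([s (S i); s i] ++ [s (S i)] ++ C).
      apply beq_app_l. apply comm_block. lia.
      apply Forall_rev, Forall_seq. intros x Hx. split; lia. }
    rewrite !app_assoc. reflexivity. }
  destruct b. exact T.
  apply (inv_swap [s i] (D j) [s (S i)]); try (apply valid_one; lia).
  now apply valid_D. exact T.
Qed.

Definition inr (lo hi : nat) (w : word) := Forall (fun x => lo <= fst x <= hi) w.

Lemma shift_word w j : inr 1 (j - 1) w -> 1 <= j -> j <= n - 1 ->
  beq n (w ++ D j) (D j ++ shiftw w).
Proof.
  intros Hw Hj Hn. induction Hw as [|[i b] w Hx Hw IH]. simpl. now rewrite app_nil_r.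
  simpl in Hx. change (((i, b) :: w) ++ D j) with ([(i, b)] ++ w ++ D j).
  rewrite IH, app_assoc, shift_letter by lia. rewrite <- app_assoc. reflexivity.
Qed.

End Br.
Lemma eps_eq n : eps n = delta n ++ [s 1].
Proof. unfold eps. now rewrite (band_succ 1). Qed.

Lemma bands_diag L : bands (map (fun i => (S i, i)) L) = map s L.
Proof. induction L; unfold bands in *; simpl; auto. rewrite band_succ. simpl. now f_equal. Qed.

Lemma inr_band i j : j < i -> inr j (i - 1) (band i j).
Proof.
  intro H. rewrite band_eq. unfold inr. apply Forall_app; split; [|apply Forall_app; split].
  - apply Forall_map, Forall_rev, Forall_seq. simpl. lia.
  - constructor; [simpl; lia | constructor].
  - apply Forall_map, Forall_seq. simpl. lia.
Qed.

Lemma inr_mono lo hi lo' hi' w : lo' <= lo -> hi <= hi' -> inr lo hi w -> inr lo' hi' w.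
Proof. intros H1 H2 H. eapply Forall_impl; [|exact H]. intros x Hx. simpl in *. lia. Qed.

Lemma inr_D k : inr 1 k (D k).
Proof. apply Forall_map, Forall_rev, Forall_seq. simpl. lia. Qed.

Section Dl.
Variable n : nat.
Hypothesis Hn : 2 <= n.
Notation dl := (delta n).

Lemma valid_delta : valid n dl.
Proof. rewrite delta_D. apply valid_D. lia. Qed.

Lemma valid_eps : valid n (eps n).
Proof. rewrite eps_eq. apply valid_app. split. apply valid_delta. apply valid_one. lia. Qed.

Lemma shift_delta w : inr 1 (n - 2) w -> beq n (w ++ dl) (dl ++ shiftw w).
Proof. intro H. rewrite delta_D. apply shift_word; try lia. eapply inr_mono; [..|exact H]; lia. Qed.

Lemma eps_pow_k k : k <= n - 1 ->
  beq n (wpow (eps n) (Z.of_nat k)) (wpow dl (Z.of_nat k) ++ D k).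
Proof.
  induction k; intro Hk. reflexivity.
  rewrite Nat2Z.inj_succ, <- Z.add_1_r, !wpow_succ by (apply valid_eps || apply valid_delta).
  rewrite IHk by lia. rewrite eps_eq, <- !app_assoc, (app_assoc (D k)), shift_delta.
  2: { eapply inr_mono; [..|apply inr_D]; lia. }
  rewrite D_S'. now rewrite <- !app_assoc.
Qed.

Lemma eps_delta : beq n (wpow (eps n) (Z.of_nat n - 1)) (wpow dl (Z.of_nat n)).
Proof.
  replace (Z.of_nat n - 1)%Z with (Z.of_nat (n - 1)) by lia.
  rewrite eps_pow_k by lia. rewrite <- delta_D.
  replace (Z.of_nat n) with (Z.of_nat (n - 1) + 1)%Z by lia.
  rewrite wpow_succ by apply valid_delta. reflexivity.
Qed.

Definition commutes (X v : word) := beq n (X ++ v) (v ++ X).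

Lemma commutes_app X a b : commutes X a -> commutes X b -> commutes X (a ++ b).
Proof. unfold commutes. intros Ha Hb. rewrite app_assoc, Ha, <- app_assoc, Hb. now rewrite app_assoc. Qed.

Lemma commutes_winv X a : valid n X -> valid n a -> commutes X a -> commutes X (winv a).
Proof.
  unfold commutes. intros VX Va H. transitivity (winv a ++ a ++ X ++ winv a).
  - rewrite app_assoc, cancel_l by auto. reflexivity.
  - rewrite (app_assoc a X), <- H, <- app_assoc, cancel_r, app_nil_r by auto. reflexivity.
Qed.

Lemma commutes_beq_v X a b : beq n a b -> commutes X a -> commutes X b.
Proof. unfold commutes. intros E H. now rewrite <- E. Qed.

Lemma commutes_beq_X X Y a : beq n X Y -> commutes X a -> commutes Y a.
Proof. unfold commutes. intros E H. now rewrite <- E. Qed.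

Notation X := (wpow dl (Z.of_nat n)).

Lemma valid_X : valid n X.
Proof. apply valid_wpow, valid_delta. Qed.

Lemma commutes_pow w a b : valid n w -> commutes (wpow w a) (wpow w b).
Proof. intro V. unfold commutes. rewrite <- !wpow_add by auto. now rewrite Z.add_comm. Qed.

Lemma commutes_pow1 w a : valid n w -> commutes (wpow w a) w.
Proof. intro V. apply (commutes_beq_v _ (wpow w 1)). rewrite wpow_1. reflexivity. now apply commutes_pow. Qed.

Lemma X_s1 : commutes X [s 1].
Proof.
  assert (E : beq n (winv dl ++ eps n) [s 1]).
  { rewrite eps_eq, app_assoc, cancel_l by apply valid_delta. reflexivity. }
  apply (commutes_beq_v _ _ _ E). apply commutes_app.
  - apply commutes_winv. apply valid_X. apply valid_delta.
    apply commutes_pow1, valid_delta.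
  - apply (commutes_beq_X (wpow (eps n) (Z.of_nat n - 1))). apply eps_delta.
    apply commutes_pow1, valid_eps.
Qed.

Lemma X_si i : 1 <= i <= n - 1 -> commutes X [s i].
Proof.
  induction i; intro H. lia.
  destruct (Nat.eq_dec i 0) as [->|Hi]. apply X_s1.
  assert (E : beq n (winv dl ++ [s i] ++ dl) [s (S i)]).
  { rewrite shift_delta. rewrite app_assoc, cancel_l by apply valid_delta. reflexivity.
    constructor; [simpl; lia | constructor]. }
  apply (commutes_beq_v _ _ _ E). apply commutes_app; [|apply commutes_app].
  - apply commutes_winv. apply valid_X. apply valid_delta.
    apply commutes_pow1, valid_delta.
  - apply IHi. lia.
  - apply commutes_pow1, valid_delta.
Qed.

Lemma X_central : central n X.
Proof.
  intros v Vv. induction Vv as [|[i b] v Hx Hv IH]. simpl. now rewrite app_nil_r.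
  change ((i, b) :: v) with ([(i, b)] ++ v). apply commutes_app; auto.
  destruct b. now apply X_si.
  change [(i, false)] with (winv [s i]). apply commutes_winv. apply valid_X.
  apply valid_one; auto. now apply X_si.
Qed.

Lemma central_beq A B : valid n A -> beq n A B -> central n B -> central n A.
Proof. intros VA E C v Vv. rewrite E. now apply C. Qed.

Lemma central_dpow m : central n (wpow dl (Z.of_nat n * m)).
Proof.
  apply (central_beq _ (wpow X m)). apply valid_wpow, valid_delta.
  symmetry. apply wpow_mul, valid_delta.
  apply central_wpow. apply valid_X. apply X_central.
Qed.

Lemma pos_delta : Defs.positive n dl.
Proof.
  exists (map (fun i => (S i, i)) (rev (seq 1 (n - 1)))). split.
  - apply Forall_map, Forall_rev, Forall_seq. intros x Hx. simpl. lia.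
  - fold (bands (map (fun i => (S i, i)) (rev (seq 1 (n - 1))))). rewrite bands_diag, delta_D. reflexivity.
Qed.

Lemma pos_delta_pow k : (0 <= k)%Z -> Defs.positive n (wpow dl k).
Proof.
  intro H. pattern k. apply natlike_ind; auto. apply pos_nil.
  intros x Hx IH. rewrite <- Z.add_1_r. eapply pos_beq. symmetry. apply wpow_succ, valid_delta.
  apply pos_app; auto. apply pos_delta.
Qed.

Lemma band_base j : 1 <= j -> j <= n - 1 -> beq n ([s j] ++ D j) (D j ++ band (S j) 1).
Proof.
  intros H1 H2. set (E := shiftw (D (j - 1))).
  assert (VE : valid n E). { unfold E, shiftw, D. apply Forall_map, Forall_map, Forall_rev, Forall_seq. simpl. lia. }
  assert (VD : valid n (D j)) by (apply valid_D; lia).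
  transitivity ([s j] ++ D j ++ E ++ winv E).
  { rewrite cancel_r, app_nil_r by auto. reflexivity. }
  assert (SW : beq n (D (j - 1) ++ D j) (D j ++ E)).
  { apply shift_word; try lia. eapply inr_mono; [..|apply inr_D]; lia. }
  rewrite (app_assoc (D j) E), <- SW.
  assert (ED : D j = s j :: D (j - 1)). { replace j with (S (j - 1)) at 1 by lia. now rewrite D_S; replace (S (j - 1)) with j by lia. }
  assert (ED' : D j = E ++ [s 1]). { unfold E. replace j with (S (j - 1)) at 1 by lia. apply D_S'. }
  rewrite band_j1 by auto. fold E. rewrite (app_assoc E [s 1] (winv E)), <- ED'.
  rewrite !app_assoc. change ([s j] ++ D (j - 1)) with (s j :: D (j - 1)). rewrite <- ED. reflexivity.
Qed.

Lemma band_L j m : 1 <= j -> j <= m -> m <= n - 1 ->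
  beq n (band (S m) j ++ D m) (D m ++ band (S j) 1).
Proof.
  intros H1. induction m; intros H2 H3. lia.
  destruct (Nat.eq_dec j (S m)) as [<-|Hjm].
  - rewrite band_succ. apply band_base; lia.
  - rewrite band_top, D_S by lia. simpl.
    apply (beq_app_l n _ _ [s (S m)]). rewrite <- app_assoc.
    change ([sinv (S m)] ++ s (S m) :: D m) with ((winv [s (S m)] ++ [s (S m)]) ++ D m).
    rewrite cancel_l by (apply valid_one; lia). simpl. rewrite IHm by lia. reflexivity.
Qed.

Lemma band_conj i j : vpair n (i, j) -> exists i' j', vpair n (i', j') /\ beq n (band i j ++ dl) (dl ++ band i' j').
Proof.
  intros (H1 & H2 & H3). destruct (Nat.eq_dec i n) as [->|Hi].
  - exists (S j), 1. split. simpl. lia. rewrite delta_D.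
    assert (Eb : band n j = band (S (n - 1)) j) by (f_equal; lia). rewrite Eb. apply band_L; lia.
  - exists (S i), (S j). split. simpl. lia. rewrite <- band_shift. apply shift_delta.
    eapply inr_mono; [..|apply inr_band]; lia.
Qed.

Lemma bands_conj l : Forall (vpair n) l -> exists l', Forall (vpair n) l' /\ beq n (bands l ++ dl) (dl ++ bands l').
Proof.
  induction 1 as [|[i j] l H Hl IH]. exists []. split. constructor. simpl. now rewrite app_nil_r.
  destruct IH as (l' & Hl' & E). destruct (band_conj i j H) as (i' & j' & Hp & E').
  exists ((i', j') :: l'). split. now constructor.
  unfold bands in *. simpl. rewrite <- app_assoc, E, app_assoc, E'. now rewrite app_assoc.
Qed.

Lemma pos_conj_fwd w : Defs.positive n w -> Defs.positive n (winv dl ++ w ++ dl).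
Proof.
  intro P. destruct (pos_bands n w P) as (l & Hl & E & _).
  destruct (bands_conj l Hl) as (l' & Hl' & E').
  exists l'. split. eapply Forall_impl; [|exact Hl']. now intros [i j].
  rewrite E, E', app_assoc, cancel_l by apply valid_delta. reflexivity.
Qed.

Lemma pos_conj_nat k w : (0 <= k)%Z -> Defs.positive n w ->
  Defs.positive n (winv (wpow dl k) ++ w ++ wpow dl k).
Proof.
  intros H P. pattern k. apply natlike_ind; auto.
  - simpl. now rewrite app_nil_r.
  - intros x Hx IH. rewrite <- Z.add_1_r.
    assert (Vx : valid n (wpow dl x)) by (apply valid_wpow, valid_delta).
    eapply pos_beq. 2: apply (pos_conj_fwd _ IH).
    assert (E1 := wpow_succ n dl x valid_delta).
    assert (E2 := winv_beq n _ _ (valid_wpow n _ _ valid_delta) E1).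
    rewrite E2, E1, winv_app. rewrite !app_assoc. reflexivity.
Qed.

End Dl.
Lemma Zmax_exists (P : Z -> Prop) a B : P a -> (forall r, P r -> (r <= B)%Z) ->
  exists r, P r /\ forall r', P r' -> (r' <= r)%Z.
Proof.
  intros Ha HB. remember (Z.to_nat (B - a)) as k eqn:Ek.
  assert (Hk : (Z.to_nat (B - a) <= k)%nat) by lia. clear Ek. revert a Ha Hk.
  induction k; intros a Ha Hk.
  - exists a. split; auto. intros r' Hr'. pose proof (HB r' Hr'). lia.
  - destruct (classic (exists r, P r /\ (a < r)%Z)) as [(r & Hr & Har)|Hno].
    + apply (IHk r Hr). specialize (HB r Hr). lia.
    + exists a. split; auto. intros r' Hr'. destruct (Z_le_gt_dec r' a); auto.
      exfalso. apply Hno. exists r'. split; auto. lia.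
Qed.

Lemma Zmin_exists (P : Z -> Prop) a B : P a -> (forall r, P r -> (B <= r)%Z) ->
  exists r, P r /\ forall r', P r' -> (r <= r')%Z.
Proof.
  intros Ha HB. destruct (Zmax_exists (fun r => P (Z.opp r)) (Z.opp a) (Z.opp B)) as (r & Hr & Hmax).
  - now rewrite Z.opp_involutive.
  - intros r Hr. specialize (HB _ Hr). lia.
  - exists (- r)%Z. split; auto. intros r' Hr'. specialize (Hmax (- r')%Z). rewrite Z.opp_involutive in Hmax.
    specialize (Hmax Hr'). lia.
Qed.

Section L.
Variable n : nat.
Hypothesis Hn : 2 <= n.
Notation dl := (delta n).
Notation dp := (wpow (delta n)).
Notation vdl := (valid_delta n Hn).

Lemma valid_dp m : valid n (dp m).
Proof. apply valid_wpow, vdl. Qed.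

Lemma dp_add a b : beq n (dp (a + b)) (dp a ++ dp b).
Proof. apply wpow_add, vdl. Qed.

Lemma winv_dp a : beq n (winv (dp a)) (dp (- a)).
Proof. symmetry. apply wpow_opp, vdl. Qed.

Lemma esum_dl : esum dl = (Z.of_nat n - 1)%Z.
Proof. rewrite delta_D. unfold D. rewrite esum_map_s, length_rev, length_seq. lia. Qed.

Lemma esum_dp m : esum (dp m) = (m * (Z.of_nat n - 1))%Z.
Proof. rewrite esum_wpow, esum_dl. lia. Qed.

Lemma pos_conj m w : Defs.positive n w -> Defs.positive n (winv (dp m) ++ w ++ dp m).
Proof.
  intro P. destruct (Z_le_gt_dec 0 m). now apply pos_conj_nat.
  set (K := (- m)%Z). set (m' := (m + Z.of_nat n * K)%Z).
  assert (Hm' : (0 <= m')%Z) by (unfold m', K; nia).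
  assert (E : beq n (dp m) (dp m' ++ dp (Z.of_nat n * - K))).
  { rewrite <- dp_add. unfold m'. replace (m + Z.of_nat n * K + Z.of_nat n * - K)%Z with m by lia. reflexivity. }
  assert (E' := winv_beq n _ _ (valid_dp m) E).
  rewrite winv_app in E'.
  assert (C := central_winv n _ (valid_dp _) (central_dpow n Hn (- K))).
  set (V := winv (dp m') ++ w ++ dp m').
  assert (VV : valid n V).
  { unfold V. rewrite !valid_app. split. apply valid_winv, valid_dp. split. now apply pos_valid in P. apply valid_dp. }
  eapply pos_beq. 2: apply (pos_conj_nat n Hn m' w Hm' P). fold V.
  rewrite E', E. symmetry.
  transitivity ((winv (dp (Z.of_nat n * - K)) ++ V) ++ dp (Z.of_nat n * - K)).
  { unfold V. rewrite !app_assoc. reflexivity. }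
  rewrite (C V VV), <- app_assoc, cancel_l, app_nil_r by apply valid_dp. reflexivity.
Qed.

Lemma preceq_beq a a' b b' : valid n a -> beq n a a' -> beq n b b' -> preceq n a b -> preceq n a' b'.
Proof. intros V Ea Eb H. unfold preceq in *. eapply pos_beq; [|exact H].
  rewrite Eb, (winv_beq n _ _ V Ea). reflexivity. Qed.

Lemma preceq_shift_l r N x : preceq n (dp r) x -> preceq n (dp (N + r)) (dp N ++ x).
Proof.
  unfold preceq. apply pos_beq. rewrite (winv_beq n _ _ (valid_dp _) (dp_add N r)), winv_app.
  rewrite <- !app_assoc, (app_assoc (winv (dp N))), cancel_l by apply valid_dp. reflexivity.
Qed.

Lemma preceq_shift_r s N x : valid n x -> preceq n x (dp s) -> preceq n (dp N ++ x) (dp (N + s)).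
Proof.
  intro V. unfold preceq. apply pos_beq. rewrite dp_add, winv_app.
  rewrite <- !app_assoc, (app_assoc (winv (dp N))), cancel_l by apply valid_dp. reflexivity.
Qed.

Lemma preceq_low r x : preceq n (dp r) x -> (r * (Z.of_nat n - 1) <= esum x)%Z.
Proof. intro H. apply pos_esum in H. rewrite esum_app, esum_winv, esum_dp in H. lia. Qed.

Lemma preceq_up s x : preceq n x (dp s) -> (esum x <= s * (Z.of_nat n - 1))%Z.
Proof. intro H. apply pos_esum in H. rewrite esum_app, esum_winv, esum_dp in H. lia. Qed.

Lemma is_inf_beq x y r : valid n x -> beq n x y -> is_inf n x r -> is_inf n y r.
Proof.
  intros V E [H1 H2]. assert (Vy : valid n y) by now apply (beq_valid n _ _ E).
  split. eapply preceq_beq; [..|exact H1]; auto. apply valid_dp. reflexivity.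
  intros r' H. apply H2. eapply preceq_beq; [..|exact H]; auto. apply valid_dp. reflexivity. now symmetry.
Qed.

Lemma is_sup_beq x y r : valid n x -> beq n x y -> is_sup n x r -> is_sup n y r.
Proof.
  intros V E [H1 H2]. assert (Vy : valid n y) by now apply (beq_valid n _ _ E).
  split. eapply preceq_beq; [..|exact H1]; auto. reflexivity.
  intros r' H. apply H2. eapply preceq_beq; [..|exact H]; auto. now symmetry. reflexivity.
Qed.

Lemma is_len_beq x y l : valid n x -> beq n x y -> is_len n x l -> is_len n y l.
Proof. intros V E (r & s & H1 & H2 & ->). exists r, s. split; [|split]; auto.
  eapply is_inf_beq; eauto. eapply is_sup_beq; eauto. Qed.

Lemma is_len_shift x l N : valid n x -> is_len n x l -> is_len n (dp N ++ x) l.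
Proof.
  intros V (r & s & [I1 I2] & [S1 S2] & ->). exists (N + r)%Z, (N + s)%Z.
  assert (Ex : beq n (dp (- N) ++ dp N ++ x) x).
  { rewrite app_assoc, <- dp_add. replace (- N + N)%Z with 0%Z by lia. reflexivity. }
  assert (Vx' : valid n (dp N ++ x)) by (apply valid_app; split; auto; apply valid_dp).
  split; [split|split; [split|]].
  - now apply preceq_shift_l.
  - intros r' H. apply (preceq_shift_l _ (- N)) in H.
    eapply preceq_beq in H; [..|reflexivity|exact Ex]. 2: apply valid_dp. apply I2 in H. lia.
  - now apply preceq_shift_r.
  - intros s' H. apply (preceq_shift_r _ (- N)) in H; auto.
    eapply preceq_beq in H; [..|exact Ex|reflexivity]. apply S2 in H. lia.
    apply valid_app; split; auto; apply valid_dp.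
  - lia.
Qed.

Lemma is_len_exists x R S : valid n x -> preceq n (dp R) x -> preceq n x (dp S) ->
  exists l, is_len n x l /\ (l <= S - R)%Z.
Proof.
  intros V HR HS.
  destruct (Zmax_exists (fun r => preceq n (dp r) x) R (Z.abs (esum x))) as (r & Hr & Hmax); auto.
  { intros r H. apply preceq_low in H. nia. }
  destruct (Zmin_exists (fun s => preceq n x (dp s)) S (- Z.abs (esum x))) as (s & Hs & Hmin); auto.
  { intros s H. apply preceq_up in H. nia. }
  exists (s - r)%Z. split. exists r, s. split; [split|split; [split|]]; auto.
  specialize (Hmax R HR). specialize (Hmin S HS). lia.
Qed.

Lemma is_len_lower x l : is_len n x l -> (0 <= l)%Z /\
  (~ (Z.divide (Z.of_nat n - 1) (esum x)) -> (1 <= l)%Z).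
Proof.
  intros (r & s & [I1 _] & [S1 _] & ->). apply preceq_low in I1. apply preceq_up in S1.
  assert (r <= s)%Z by nia. split. lia. intro Hd.
  destruct (Z.eq_dec r s) as [->|]. exfalso. apply Hd. exists s. lia. lia.
Qed.

Lemma is_len_unique x l l' : is_len n x l -> is_len n x l' -> l = l'.
Proof.
  intros (r & s & [I1 I2] & [S1 S2] & ->) (r' & s' & [I1' I2'] & [S1' S2'] & ->).
  specialize (I2 _ I1'). specialize (I2' _ I1). specialize (S2 _ S1'). specialize (S2' _ S1). lia.
Qed.

Lemma conj_beq1 a a' b : beq n a a' -> conj_class n a b -> conj_class n a' b.
Proof. intros E (V & c & Vc & H). split; auto. exists c. split; auto. now rewrite <- E. Qed.

Lemma conj_beq2 a b b' : valid n b' -> beq n b b' -> conj_class n a b -> conj_class n a b'.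
Proof. intros V E (_ & c & Vc & H). split; auto. exists c. split; auto. now rewrite <- E. Qed.

Lemma conj_esum a b : conj_class n a b -> esum b = esum a.
Proof. intros (_ & c & _ & H). rewrite (esum_beq _ _ _ H), !esum_app, esum_winv. lia. Qed.

Lemma conj_refl a : valid n a -> conj_class n a a.
Proof. intro V. split; auto. exists []. split. constructor. simpl. now rewrite app_nil_r. Qed.

Lemma sss_beq a a' b b' : beq n a a' -> beq n b b' -> valid n b' -> sss n a b -> sss n a' b'.
Proof.
  intros Ea Eb V [C (l & Hl & Hmin)]. split.
  - apply (conj_beq1 a a' b' Ea). apply (conj_beq2 a b b' V Eb C).
  - exists l. split. apply (is_len_beq b b' l (proj1 C) Eb Hl).
    intros c l' Hc Hl'. apply (Hmin c l'); auto. eapply conj_beq1; eauto. now symmetry.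
Qed.

Lemma sss_shift a b m : sss n a b ->
  sss n (dp (Z.of_nat n * m) ++ a) (dp (Z.of_nat n * m) ++ b).
Proof.
  intros [C (l & Hl & Hmin)]. set (Z := dp (Z.of_nat n * m)).
  assert (CZ : central n Z) by apply central_dpow, Hn.
  assert (VZ : valid n Z) by apply valid_dp.
  assert (CZ' : central n (dp (Z.of_nat n * - m))) by apply central_dpow, Hn.
  assert (ZZ : forall w, beq n (dp (Z.of_nat n * - m) ++ Z ++ w) w).
  { intro w. unfold Z. rewrite app_assoc, <- dp_add. replace (Z.of_nat n * - m + Z.of_nat n * m)%Z with 0%Z by lia. reflexivity. }
  destruct C as (Vb & c & Vc & Hc). split; [split|].
  - apply valid_app; auto.
  - exists c. split; auto. rewrite Hc. rewrite !app_assoc, (CZ (winv c)) by now apply valid_winv. reflexivity.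
  - exists l. split. now apply is_len_shift.
    intros c' l' Hc' Hl'. apply (Hmin (dp (Z.of_nat n * - m) ++ c') l').
    + destruct Hc' as (Vc' & e & Ve & He). split. apply valid_app; split; auto. apply valid_dp.
      exists e. split; auto. rewrite He.
      rewrite <- (app_assoc Z a e), (app_assoc (winv e) Z), <- (CZ (winv e)) by now apply valid_winv.
      rewrite <- app_assoc, ZZ. reflexivity.
    + apply is_len_shift; auto. now destruct Hc'.
Qed.

End L.
Section Per.
Variable n : nat.
Hypothesis Hn : 2 <= n.
Notation dl := (delta n).
Notation dp := (wpow (delta n)).
Notation vdl := (valid_delta n Hn).

Lemma powlow x c : valid n x -> Defs.positive n (winv (dp c) ++ x) ->
  forall t, (0 <= t)%Z -> Defs.positive n (winv (dp (c * t)) ++ wpow x t).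
Proof.
  intros V HS t Ht. pattern t. apply natlike_ind; auto.
  - rewrite Z.mul_0_r. apply pos_nil.
  - intros t' Ht' IH.
    eapply pos_beq. 2: apply pos_app; [apply (pos_conj n Hn c _ IH) | exact HS].
    rewrite <- Z.add_1_r, Z.mul_add_distr_l, Z.mul_1_r.
    assert (E1 := winv_beq n _ _ (valid_dp n Hn _) (dp_add n Hn (c * t') c)).
    rewrite E1, winv_app, (wpow_succ n x t' V).
    rewrite <- !app_assoc. rewrite (app_assoc (dp c) (winv (dp c))), cancel_r by apply valid_dp, Hn.
    reflexivity.
Qed.

Lemma pow_split x u j t : valid n x -> beq n (wpow x u) (dp (Z.of_nat n)) ->
  beq n (wpow x (u * j + t)) (dp (Z.of_nat n * j) ++ wpow x t).
Proof.
  intros V E. rewrite wpow_add by auto. apply beq_app_r.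
  rewrite <- wpow_mul by auto. rewrite (wpow_proper n _ _ j (valid_wpow n _ _ V) E).
  apply wpow_mul, vdl.
Qed.

Lemma powup x d u t : valid n x -> Defs.positive n (winv (dp d) ++ x) ->
  (d * u = Z.of_nat n - 1)%Z -> beq n (wpow x u) (dp (Z.of_nat n)) -> (0 <= t <= u)%Z ->
  preceq n (wpow x t) (dp (d * t + 1)).
Proof.
  intros V HS Hdu E Ht. unfold preceq.
  set (D0 := (d * (u - t))%Z).
  assert (Q := powlow x d V HS (u - t) ltac:(lia)). fold D0 in Q.
  assert (VXt : valid n (wpow x t)) by now apply valid_wpow.
  assert (VXu : valid n (wpow x (u - t))) by now apply valid_wpow.
  eapply pos_beq. 2: apply (pos_conj n Hn (- D0) _ Q).
  assert (E1 : beq n (winv (wpow x t)) (wpow x (u - t) ++ winv (wpow x u))).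
  { transitivity (winv (wpow x t) ++ wpow x u ++ winv (wpow x u)).
    - rewrite cancel_r, app_nil_r by now apply valid_wpow. reflexivity.
    - replace u with (t + (u - t))%Z at 1 by lia. rewrite wpow_add by auto.
      rewrite !app_assoc, cancel_l by auto. reflexivity. }
  assert (E2 : beq n (winv (wpow x u)) (dp (- Z.of_nat n))).
  { rewrite (winv_beq n _ _ (valid_wpow n _ _ V) E). apply winv_dp, Hn. }
  symmetry. rewrite E1, E2, <- app_assoc, <- dp_add by auto.
  replace (- Z.of_nat n + (d * t + 1))%Z with (- D0)%Z by (unfold D0; lia).
  rewrite (winv_dp n Hn (- D0)), Z.opp_involutive.
  rewrite !app_assoc, cancel_r by apply valid_dp, Hn. reflexivity.
Qed.

Lemma per x d u : valid n x -> Defs.positive n (winv (dp d) ++ x) ->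
  (1 <= d)%Z -> (1 <= u)%Z -> (d * u = Z.of_nat n - 1)%Z -> beq n (wpow x u) (dp (Z.of_nat n)) ->
  forall m, exists R, preceq n (dp R) (wpow x m) /\ preceq n (wpow x m) (dp (R + 1)) /\
    ((u | m)%Z -> preceq n (wpow x m) (dp R)).
Proof.
  intros V HS Hd Hu Hdu E m.
  set (j := (m / u)%Z). set (t := (m mod u)%Z).
  assert (Hm : m = (u * j + t)%Z) by (apply Z.div_mod; lia).
  assert (Ht : (0 <= t < u)%Z) by (apply Z.mod_pos_bound; lia).
  assert (Em := pow_split x u j t V E). rewrite <- Hm in Em.
  assert (VXt : valid n (wpow x t)) by now apply valid_wpow.
  assert (VA : valid n (dp (Z.of_nat n * j) ++ wpow x t)) by (apply valid_app; split; auto; apply valid_dp, Hn).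
  exists (Z.of_nat n * j + d * t)%Z. split; [|split].
  - eapply preceq_beq; [..|reflexivity|symmetry; exact Em|]. apply valid_dp, Hn.
    apply preceq_shift_l; auto. apply powlow; auto. lia.
  - eapply preceq_beq; [exact VA|symmetry; exact Em|reflexivity|].
    rewrite <- Z.add_assoc. apply preceq_shift_r; auto. apply (powup x d u); auto. lia.
  - intro Hdiv. assert (t = 0%Z). { unfold t. apply Z.mod_divide; auto; lia. }
    eapply preceq_beq; [exact VA|symmetry; exact Em|reflexivity|].
    rewrite H, Z.mul_0_r, Z.add_0_r. replace (Z.of_nat n * j)%Z with (Z.of_nat n * j + 0)%Z at 2 by lia.
    apply (preceq_shift_r n Hn). constructor. simpl. apply pos_nil.
Qed.

End Per.
Global Instance pos_Proper n : Proper (beq n ==> iff) (Defs.positive n).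
Proof. intros a b E. split; apply pos_beq; auto. now symmetry. Qed.

Section Main.
Variable n : nat.
Hypothesis Hn : 2 <= n.
Notation dl := (delta n).
Notation dp := (wpow (delta n)).
Notation vdl := (valid_delta n Hn).

Lemma esum_eps : esum (eps n) = Z.of_nat n.
Proof. rewrite eps_eq, esum_app, esum_dl by auto. simpl. lia. Qed.

Lemma pos_eps1 : Defs.positive n (winv (dp 1) ++ eps n).
Proof.
  rewrite wpow_1, eps_eq, app_assoc, cancel_l by apply vdl.
  simpl. rewrite <- (band_succ 1). apply pos_band. simpl. lia.
Qed.

Lemma not_div_lemma u d m : (1 <= d)%Z -> (Z.of_nat n - 1 = u * d)%Z -> ~ (u | m)%Z ->
  ~ (Z.of_nat n - 1 | m * (d * Z.of_nat n))%Z.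
Proof.
  intros Hd Hu Hnd [k Hk]. apply Hnd.
  assert (E : (m * Z.of_nat n = k * u)%Z).
  { apply (Z.mul_reg_l _ _ d). lia. nia. }
  apply (Z.gauss _ (Z.of_nat n)). exists k. lia.
  apply Z.bezout_1_gcd. exists (- d)%Z, 1%Z. lia.
Qed.

Lemma sss_stable d : (1 <= d)%Z -> (d | Z.of_nat n - 1)%Z ->
  forall a, sss n (wpow (eps n) d) a -> stable_sss n (wpow (eps n) d) a.
Proof.
  intros Hd [u Hu] a Ha. assert (Hu1 : (1 <= u)%Z) by nia.
  set (ed := wpow (eps n) d).
  assert (Ve := valid_eps n Hn).
  assert (Ved : valid n ed) by now apply valid_wpow.
  assert (Eeu : beq n (wpow ed u) (dp (Z.of_nat n))).
  { unfold ed. rewrite wpow_mul by auto. replace (d * u)%Z with (Z.of_nat n - 1)%Z by lia. apply eps_delta, Hn. }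
  assert (Ped : Defs.positive n (winv (dp d) ++ ed)).
  { unfold ed. replace d with (1 * d)%Z at 1 by lia. apply powlow; auto. apply pos_eps1. lia. }
  destruct (per n Hn ed d u Ved Ped Hd Hu1 ltac:(lia) Eeu 1) as (R1 & P1 & P2 & _).
  rewrite wpow_1 in P1, P2.
  destruct (is_len_exists n Hn ed R1 (R1 + 1) Ved P1 P2) as (l1 & Hl1 & Hl1le).
  destruct Ha as [Ca (l & Hl & Hmin)].
  assert (Hll1 : (l <= l1)%Z) by (apply (Hmin ed l1); auto; apply conj_refl; auto).
  assert (Ea : esum a = (d * Z.of_nat n)%Z) by (rewrite (conj_esum n Hn _ _ Ca); unfold ed; rewrite esum_wpow, esum_eps; lia).
  destruct Hl as (r & s0 & [I1 I2] & [S1 S2] & Hls).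
  assert (Hr : (d <= r)%Z).
  { apply (preceq_low n Hn) in I1. apply (preceq_up n Hn) in S1. nia. }
  destruct Ca as (Va & c & Vc & Hc).
  assert (Pa : Defs.positive n (winv (dp d) ++ a)).
  { eapply pos_beq. 2: apply pos_app; [apply (pos_delta_pow n Hn (r - d)); lia | exact I1].
    rewrite (winv_dp n Hn r), app_assoc, <- dp_add by auto.
    rewrite (winv_dp n Hn d). replace (r - d + - r)%Z with (- d)%Z by lia. reflexivity. }
  assert (Eau : beq n (wpow a u) (dp (Z.of_nat n))).
  { rewrite (wpow_proper n _ _ u Va Hc), wpow_conj by auto. fold ed. rewrite Eeu.
    rewrite (app_assoc (winv c)), <- (X_central n Hn (winv c)) by now apply valid_winv.
    rewrite <- app_assoc, cancel_l, app_nil_r by auto. reflexivity. }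
  split.
  - split. split; auto. exists c; auto. exists l. split. exists r, s0. repeat split; auto. exact Hmin.
  - intro m. destruct (per n Hn a d u Va Pa Hd Hu1 ltac:(lia) Eau m) as (R & Q1 & Q2 & Q3).
    assert (Vam : valid n (wpow a m)) by now apply valid_wpow.
    destruct (is_len_exists n Hn _ R (R + 1) Vam Q1 Q2) as (lm & Hlm & Hlmle).
    split; [split|].
    + auto.
    + exists c. split; auto. rewrite (wpow_proper n _ _ m Va Hc). apply wpow_conj; auto.
    + exists lm. split; auto. intros c' l' Hc' Hl'.
      destruct (is_len_lower n Hn _ _ Hl') as [L0 L1].
      assert (Ec' : esum c' = (m * (d * Z.of_nat n))%Z).
      { rewrite (conj_esum n Hn _ _ Hc'). rewrite esum_wpow. unfold ed. rewrite esum_wpow, esum_eps. lia. }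
      destruct (classic (u | m)%Z) as [Hdv|Hndv].
      * destruct (is_len_exists n Hn _ R R Vam Q1 (Q3 Hdv)) as (l0 & Hl0 & Hl0le).
        rewrite (is_len_unique n Hn _ _ _ Hlm Hl0). lia.
      * assert (1 <= l')%Z. { apply L1. rewrite Ec'. apply (not_div_lemma u d m); auto. }
        lia.
Qed.

End Main.
Fixpoint allseqs {A} (L : list A) (k : nat) : list (list A) :=
  match k with
  | 0 => [[]]
  | S k' => flat_map (fun a => map (cons a) (allseqs L k')) L
  end.

Lemma allseqs_in {A} (L : list A) bl : Forall (fun x => In x L) bl -> In bl (allseqs L (length bl)).
Proof.
  induction 1 as [|x bl Hx Hbl IH]; simpl. now left.
  apply in_flat_map. exists x. split; auto. now apply in_map.
Qed.

Definition zrange (lo hi : Z) : list Z := map (fun k => (lo + Z.of_nat k)%Z) (seq 0 (Z.to_nat (hi - lo + 1))).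

Lemma zrange_in lo hi r : (lo <= r <= hi)%Z -> In r (zrange lo hi).
Proof.
  intro H. unfold zrange. apply in_map_iff. exists (Z.to_nat (r - lo)). split. lia.
  apply in_seq. lia.
Qed.

Lemma FOP_mid {T} (R : T -> T -> Prop) a x b : ForallOrdPairs R (a ++ x :: b) ->
  ForallOrdPairs R (a ++ b) /\ forall z, In z (a ++ b) -> R z x \/ R x z.
Proof.
  induction a as [|c a IH]; simpl; intro H.
  - inversion H; subst. split; auto. intros z Hz. right. eapply Forall_forall; eauto.
  - inversion H; subst. destruct (IH H3) as [H5 H6]. split.
    + constructor; auto. apply Forall_forall. intros y Hy. eapply Forall_forall; [exact H2|].
      apply in_app_or in Hy. apply in_or_app. simpl. tauto.
    + intros z [<-|Hz]; auto. left. eapply Forall_forall; [exact H2|]. apply in_or_app. simpl. auto.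
Qed.

Section Card.
Variable n : nat.

Lemma pigeon l2 : forall l1, ForallOrdPairs (fun u v => ~ beq n u v) l1 ->
  (forall x, In x l1 -> Exists (beq n x) l2) -> length l1 <= length l2.
Proof.
  induction l2 as [|y l2 IH]; intros l1 H1 H2.
  - destruct l1 as [|x l1]. simpl; lia. specialize (H2 x (or_introl eq_refl)). inversion H2.
  - destruct (classic (exists x0, In x0 l1 /\ beq n x0 y)) as [(x0 & Hin & Hxy)|Hno].
    + destruct (in_split _ _ Hin) as (a & b & ->).
      destruct (FOP_mid _ _ _ _ H1) as [H3 H4].
      assert (length (a ++ b) <= length l2).
      { apply IH; auto. intros x Hx. assert (Hx' : In x (a ++ x0 :: b)).
        { apply in_app_or in Hx. apply in_or_app. simpl. tauto. }
        specialize (H2 x Hx'). inversion H2; subst; auto.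
        exfalso. destruct (H4 x Hx) as [Hc|Hc]; apply Hc.
        - rewrite H0. now symmetry. - rewrite Hxy. now symmetry. }
      rewrite length_app in *. simpl. lia.
    + simpl. transitivity (length l2); [|lia]. apply IH; auto.
      intros x Hx. specialize (H2 x Hx). inversion H2; subst; auto.
      exfalso. apply Hno. eauto.
Qed.

Lemma has_card_le P Q N M : has_card n P N -> has_card n Q M -> (forall w, P w -> Q w) -> N <= M.
Proof.
  intros (l1 & <- & F1 & O1 & _) (l2 & <- & F2 & O2 & C2) PQ.
  apply pigeon; auto. intros x Hx. apply C2. apply PQ. eapply Forall_forall; eauto.
Qed.

Lemma has_card_ext P Q N : (forall w, P w <-> Q w) -> has_card n P N -> has_card n Q N.
Proof.
  intros E (l & Hl & F & O & C). exists l. split; auto. split; [|split; auto].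
  eapply Forall_impl; [|exact F]. intros a. apply E.
  intros w Hw. apply C, E, Hw.
Qed.

Lemma FOP_map {A B} (R : A -> A -> Prop) (R' : B -> B -> Prop) (f : A -> B) l :
  (forall u v, In u l -> In v l -> R u v -> R' (f u) (f v)) -> ForallOrdPairs R l -> ForallOrdPairs R' (map f l).
Proof.
  intro H. induction 1 as [|a l Ha Hl IH]; simpl; constructor.
  - apply Forall_map. apply Forall_forall. intros x Hx. apply H; simpl; auto. eapply Forall_forall; eauto.
  - apply IH. intros u v Hu Hv. apply H; simpl; auto.
Qed.

Lemma has_card_map P Q N (f g : word -> word) :
  has_card n P N ->
  (forall w, P w -> Q (f w)) -> (forall w, Q w -> P (g w)) ->
  (forall w, Q w -> beq n (f (g w)) w) ->
  (forall u v, P u -> P v -> beq n (f u) (f v) -> beq n u v) ->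
  (forall u v, P u -> P v -> beq n u v -> beq n (f u) (f v)) ->
  has_card n Q N.
Proof.
  intros (l & Hl & F & O & C) HPQ HQP Hfg Hinj Hresp.
  assert (HP : forall x, In x l -> P x) by (intros; eapply Forall_forall; eauto).
  exists (map f l). split; [now rewrite length_map|]. split; [|split].
  - apply Forall_map. eapply Forall_impl; [|exact F]. auto.
  - eapply FOP_map; [|exact O]. intros u v Hu Hv Hne E. apply Hne. apply Hinj; auto.
  - intros w Hw. specialize (C _ (HQP w Hw)). apply Exists_exists in C as (x & Hx & E).
    apply Exists_exists. exists (f x). split. now apply in_map.
    rewrite <- (Hfg w Hw). apply Hresp; auto.
Qed.

Lemma cover_card L : forall P, (forall w, P w -> Exists (beq n w) L) -> exists N, has_card n P N.
Proof.
  induction L as [|x L IH]; intros P H.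
  - exists 0, []. split; [reflexivity|]. split; [constructor|]. split; [constructor|].
    intros w Hw. specialize (H w Hw). inversion H.
  - destruct (classic (exists y, P y /\ beq n y x)) as [(y0 & Hy0 & Ey0)|Hno].
    + destruct (IH (fun w => P w /\ ~ beq n w x)) as (N & l & Hl & F & O & C).
      { intros w [Hw Hnw]. specialize (H w Hw). inversion H; subst; auto. contradiction. }
      exists (S N), (y0 :: l). split. simpl; auto. split; [|split].
      * constructor; auto. eapply Forall_impl; [|exact F]. now intros a [].
      * constructor; auto. apply Forall_forall. intros v Hv E.
        assert (Hv' := proj1 (Forall_forall _ _) F v Hv). apply (proj2 Hv'). rewrite <- E. exact Ey0.
      * intros w Hw. destruct (classic (beq n w x)) as [E|NE].
        -- constructor. rewrite E. now symmetry.
        -- apply Exists_cons_tl. apply C. auto.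
    + apply IH. intros w Hw. specialize (H w Hw). inversion H; subst; auto.
      exfalso. apply Hno. eauto.
Qed.

End Card.

Section Fin.
Variable n : nat.
Hypothesis Hn : 2 <= n.
Notation dp := (wpow (delta n)).

Definition allpairs := list_prod (seq 1 n) (seq 1 n).

Lemma sss_finite a : exists N, has_card n (sss n a) N.
Proof.
  destruct (classic (exists w0, sss n a w0)) as [(w0 & [C0 (l0 & Hl0 & Hmin0)])|Hno].
  2: { apply (cover_card n []). intros w Hw. exfalso. eauto. }
  set (E := esum a).
  apply (cover_card n (flat_map (fun r => map (fun bl => dp r ++ bands bl)
            (allseqs allpairs (Z.to_nat (E - r * (Z.of_nat n - 1)))))
          (zrange (- Z.abs E - l0) (Z.abs E)))).
  intros w [Cw (l & Hl & Hmin)].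
  assert (l = l0). { specialize (Hmin w0 l0 C0 Hl0). specialize (Hmin0 w l Cw Hl). lia. }
  subst l.
  assert (Ew : esum w = E) by (apply (conj_esum n Hn); auto).
  destruct Hl as (r & s0 & [I1 _] & [S1 _] & Hs).
  assert (B1 := preceq_low n Hn _ _ I1). assert (B2 := preceq_up n Hn _ _ S1).
  destruct (pos_bands n _ I1) as (bl & Hbl & Ebl & Lbl).
  apply Exists_exists. exists (dp r ++ bands bl). split.
  - apply in_flat_map. exists r. split.
    + apply zrange_in. rewrite Ew in B1, B2. nia.
    + apply (in_map (fun bl => dp r ++ bands bl)). rewrite esum_app, esum_winv, (esum_dp n Hn), Ew in Lbl.
      replace (Z.to_nat (E - r * (Z.of_nat n - 1))) with (length bl) by lia.
      apply allseqs_in. eapply Forall_impl; [|exact Hbl]. intros [i j] Hij.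
      unfold allpairs. apply in_prod; apply in_seq; simpl in Hij; lia.
  - rewrite <- Ebl, app_assoc, cancel_r by apply valid_dp, Hn. reflexivity.
Qed.

End Fin.
Section Thm.
Variables (n : nat) (k p q d v : Z).
Hypothesis Hn : 2 <= n.
Hypothesis Hd : (1 <= d)%Z.
Hypothesis Hdn : (d | Z.of_nat n - 1)%Z.
Hypothesis Hkv : k = (d * v)%Z.
Hypothesis Hbez : ((Z.of_nat n - 1) * p + k * q = d)%Z.
Notation dp := (wpow (delta n)).
Notation ep := (wpow (eps n)).
Notation ed := (ep d).
Notation ek := (ep k).
Definition Cl (m : Z) (c : word) := winv c ++ ep m ++ c.

Lemma Ve : valid n (eps n). Proof. apply valid_eps, Hn. Qed.
Lemma Vep m : valid n (ep m). Proof. apply valid_wpow, Ve. Qed.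
Lemma VCl m c : valid n c -> valid n (Cl m c).
Proof. intro V. unfold Cl. rewrite !valid_app. split. now apply valid_winv. split; auto. apply Vep. Qed.

Lemma ep_mul a b : beq n (wpow (ep a) b) (ep (a * b)).
Proof. apply wpow_mul, Ve. Qed.

Lemma Cl_pow m c j : valid n c -> beq n (wpow (Cl m c) j) (Cl (m * j) c).
Proof. intro V. unfold Cl. rewrite wpow_conj by (auto; apply Vep). now rewrite ep_mul. Qed.

Lemma dp_ep P : beq n (dp (Z.of_nat n * P)) (ep ((Z.of_nat n - 1) * P)).
Proof.
  rewrite <- (wpow_mul n (delta n)) by apply valid_delta, Hn.
  rewrite (wpow_proper n _ _ P (valid_wpow n _ _ (valid_delta n Hn)) (symmetry (eps_delta n Hn))).
  apply ep_mul.
Qed.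

Lemma shiftCl P Q c : valid n c -> beq n (dp (Z.of_nat n * P) ++ Cl Q c) (Cl ((Z.of_nat n - 1) * P + Q) c).
Proof.
  intro V. unfold Cl. rewrite app_assoc, (central_dpow n Hn P (winv c)) by now apply valid_winv.
  rewrite <- app_assoc, (app_assoc (dp _)), dp_ep, <- wpow_add by apply Ve. reflexivity.
Qed.

Definition ff (a : word) := wpow a v.
Definition gg (b : word) := dp (Z.of_nat n * p) ++ wpow b q.

Lemma conj_Cl m b : conj_class n (ep m) b -> exists c, valid n c /\ beq n b (Cl m c).
Proof. intros (_ & c & Vc & H). exists c. auto. Qed.

Lemma Cl_conj m b c : valid n b -> valid n c -> beq n b (Cl m c) -> conj_class n (ep m) b.
Proof. intros Vb Vc H. split; auto. exists c. auto. Qed.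

Lemma f_Cl c : valid n c -> beq n (ff (Cl d c)) (Cl k c).
Proof. intro V. unfold ff. rewrite Cl_pow by auto. now rewrite Hkv. Qed.

Lemma g_Cl c : valid n c -> beq n (gg (Cl k c)) (Cl d c).
Proof. intro V. unfold gg. rewrite Cl_pow, shiftCl by auto. now rewrite Hbez. Qed.

Lemma Vff a : valid n a -> valid n (ff a).
Proof. apply valid_wpow. Qed.
Lemma Vgg b : valid n b -> valid n (gg b).
Proof. intro V. unfold gg. apply valid_app. split. apply valid_wpow, valid_delta, Hn. now apply valid_wpow. Qed.

Lemma ff_beq a a' : valid n a -> beq n a a' -> beq n (ff a) (ff a').
Proof. intros V E. now apply wpow_proper. Qed.
Lemma gg_beq b b' : valid n b -> beq n b b' -> beq n (gg b) (gg b').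
Proof. intros V E. unfold gg. now rewrite (wpow_proper n _ _ q V E). Qed.

Lemma part1 a : conj_class n ed a -> conj_class n ek (ff a) /\ beq n (gg (ff a)) a.
Proof.
  intro Ca. destruct (conj_Cl _ _ Ca) as (c & Vc & Ha). assert (Va := proj1 Ca).
  assert (E1 : beq n (ff a) (Cl k c)) by (rewrite (ff_beq _ _ Va Ha); now apply f_Cl).
  split. apply (Cl_conj k _ c); auto. now apply Vff.
  rewrite (gg_beq _ _ (Vff _ Va) E1), g_Cl by auto. now symmetry.
Qed.

Lemma part2 b : conj_class n ek b -> conj_class n ed (gg b) /\ beq n (ff (gg b)) b.
Proof.
  intro Cb. destruct (conj_Cl _ _ Cb) as (c & Vc & Hb). assert (Vb := proj1 Cb).
  assert (E1 : beq n (gg b) (Cl d c)) by (rewrite (gg_beq _ _ Vb Hb); now apply g_Cl).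
  split. apply (Cl_conj d _ c); auto. now apply Vgg.
  rewrite (ff_beq _ _ (Vgg _ Vb) E1), f_Cl by auto. now symmetry.
Qed.

Lemma part_f a : stable_sss n ed a -> stable_sss n ek (ff a).
Proof.
  intros [Sa Sm]. assert (Va : valid n a) by apply Sa.
  assert (Vfa := Vff a Va).
  split.
  - eapply sss_beq; [exact Hn|..|exact (Sm v)]. rewrite ep_mul. now rewrite Hkv. reflexivity. auto.
  - intro m. eapply sss_beq; [exact Hn|..|exact (Sm (v * m)%Z)].
    + rewrite !ep_mul. replace (k * m)%Z with (d * (v * m))%Z by (rewrite Hkv; lia). reflexivity.
    + unfold ff. symmetry. apply wpow_mul, Va.
    + now apply valid_wpow.
Qed.

Lemma part_g b : stable_sss n ek b -> stable_sss n ed (gg b).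
Proof.
  intros [Sb Sm]. assert (Vb : valid n b) by apply Sb.
  destruct (conj_Cl _ _ (proj1 Sb)) as (c & Vc & Hb).
  assert (Eg : beq n (gg b) (Cl d c)) by (rewrite (gg_beq _ _ Vb Hb); now apply g_Cl).
  assert (key : forall m, sss n (wpow ed m) (wpow (gg b) m)).
  { intro m. eapply sss_beq; [exact Hn|..|exact (sss_shift n Hn _ _ (p * m) (Sm (q * m)%Z))].
    - rewrite ep_mul, dp_ep, ep_mul, <- wpow_add by apply Ve.
      replace ((Z.of_nat n - 1) * (p * m) + k * (q * m))%Z with (d * m)%Z by nia. reflexivity.
    - rewrite (wpow_proper n _ _ _ Vb Hb), Cl_pow, shiftCl by auto.
      rewrite (wpow_proper n _ _ _ (Vgg _ Vb) Eg), Cl_pow by auto.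
      replace ((Z.of_nat n - 1) * (p * m) + k * (q * m))%Z with (d * m)%Z by nia. reflexivity.
    - apply valid_wpow, Vgg, Vb. }
  split; auto. specialize (key 1%Z). now rewrite !wpow_1 in key.
Qed.

Lemma main_gen :
  (forall a, conj_class n ed a -> conj_class n ek (ff a)) /\
  (forall b, conj_class n ek b -> conj_class n ed (gg b)) /\
  (forall a, conj_class n ed a -> beq n (gg (ff a)) a) /\
  (forall b, conj_class n ek b -> beq n (ff (gg b)) b) /\
  (forall a, stable_sss n ed a -> stable_sss n ek (ff a)) /\
  (forall b, stable_sss n ek b -> exists a, stable_sss n ed a /\ beq n (ff a) b) /\
  (forall b, stable_sss n ek b -> stable_sss n ed (gg b)) /\
  (forall a, stable_sss n ed a -> exists b, stable_sss n ek b /\ beq n (gg b) a) /\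
  (exists N M,
      has_card n (sss n ed) N /\ has_card n (stable_sss n ed) N /\
      has_card n (stable_sss n ek) N /\ has_card n (sss n ek) M /\ N <= M).
Proof.
  split; [intros; now apply part1|]. split; [intros; now apply part2|].
  split; [intros; now apply part1|]. split; [intros; now apply part2|].
  split; [exact part_f|].
  split; [intros b Hb; exists (gg b); split; [now apply part_g | apply part2, Hb]|].
  split; [exact part_g|].
  split; [intros a Ha; exists (ff a); split; [now apply part_f | apply part1, Ha]|].
  destruct (sss_finite n Hn ed) as (N & HN).
  destruct (sss_finite n Hn ek) as (M & HM).
  assert (HSt : has_card n (stable_sss n ed) N).
  { apply (has_card_ext n (sss n ed)); auto. intro w. split. now apply sss_stable. intros [H _]; exact H. }
  assert (HSt' : has_card n (stable_sss n ek) N).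
  { apply (has_card_map n (stable_sss n ed) _ N ff gg HSt).
    - exact part_f.
    - exact part_g.
    - intros w Hw. apply part2, Hw.
    - intros u w Hu Hw E.
      assert (Vu : valid n (ff u)) by (apply Vff, Hu).
      rewrite <- (proj2 (part1 u (proj1 (proj1 Hu)))), <- (proj2 (part1 w (proj1 (proj1 Hw)))).
      now apply gg_beq.
    - intros u w Hu Hw E. apply ff_beq; auto. apply Hu. }
  exists N, M. repeat split; auto.
  apply (has_card_le n _ _ _ _ HSt' HM). intros w [H _]; exact H.
Qed.

End Thm.

Theorem proposition3p5 (n : nat) (k p q : Z) :
  2 <= n ->
  ((Z.of_nat n - 1) * p + k * q = Z.gcd k (Z.of_nat n - 1))%Z ->
  let d := Z.gcd k (Z.of_nat n - 1) in
  let ed := wpow (eps n) d in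
  let ek := wpow (eps n) k in
  let f := fun a => wpow a (k / d)%Z in
  let g := fun b => wpow (delta n) (Z.of_nat n * p)%Z ++ wpow b q in
  (* f : [eps^d] -> [eps^k] and g : [eps^k] -> [eps^d] are well defined *)
  (forall a, conj_class n ed a -> conj_class n ek (f a)) /\
  (forall b, conj_class n ek b -> conj_class n ed (g b)) /\
  (* f and g are inverse to each other *)
  (forall a, conj_class n ed a -> beq n (g (f a)) a) /\
  (forall b, conj_class n ek b -> beq n (f (g b)) b) /\
  (* f([eps^d]^St) = [eps^k]^St *)
  (forall a, stable_sss n ed a -> stable_sss n ek (f a)) /\
  (forall b, stable_sss n ek b -> exists a, stable_sss n ed a /\ beq n (f a) b) /\
  (* g([eps^k]^St) = [eps^d]^St *)
  (forall b, stable_sss n ek b -> stable_sss n ed (g b)) /\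
  (forall a, stable_sss n ed a -> exists b, stable_sss n ek b /\ beq n (g b) a) /\
  (* #[eps^d]^S = #[eps^d]^St = #[eps^k]^St <= #[eps^k]^S *)
  (exists N M,
      has_card n (sss n ed) N /\ has_card n (stable_sss n ed) N /\
      has_card n (stable_sss n ek) N /\ has_card n (sss n ek) M /\ N <= M).
Proof.
  intros Hn Hbez d ed ek f g.
  assert (Hd0 : (0 <= d)%Z) by apply Z.gcd_nonneg.
  assert (Hdn : (d | Z.of_nat n - 1)%Z) by apply Z.gcd_divide_r.
  assert (Hdk : (d | k)%Z) by apply Z.gcd_divide_l.
  assert (Hd : (1 <= d)%Z).
  { destruct (Z.eq_dec d 0) as [E|E]; [|lia]. destruct Hdn as [x Hx]. lia. }
  assert (Hkv : k = (d * (k / d))%Z).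
  { destruct Hdk as [x Hx]. rewrite Hx, Z.div_mul by lia. lia. }
  exact (main_gen n k p q d (k / d) Hn Hd Hdn Hkv Hbez).
Qed.
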